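(* Let $\mathbb{H}$ be any real Hilbert space (of dimension at least $2$) and $T\in\mathbb{L}(\ell_4^2,\mathbb{H})$ of rank one with $\|T\|=1$. Then $T$ is an extreme contraction if and only if $M_T=\{\pm(1,0)\}$ or $M_T=\{\pm(0,1)\}$. In particular, if $\mathbb{H}=\ell_2^n$, then the rank one extreme contractions in $\mathbb{L}(\ell_4^2,\ell_2^n)$ are exactly the operators whose matrix representations with respect to the standard ordered bases are of the form $\begin{bmatrix} x_1&0\\ x_2&0\\ \vdots&\vdots\\ x_n&0\end{bmatrix}$ or $\begin{bmatrix} 0&x_1\\ 0&x_2\\ \vdots&\vdots\\ 0&x_n\end{bmatrix}$, where $x_1^2+x_2^2+\cdots+x_n^2=1$.
   Context: $\ell_q^m$ is $\mathbb{R}^m$ with the $q$-norm. $M_T=\{u\in\ell_4^2:\|u\|=1,\ \|Tu\|=\|T\|\}$. An extreme contraction is a norm one operator that is an extreme point of the closed unit ball of $\mathbb{L}(\ell_4^2,\mathbb{H})$ (bounded linear operators, operator norm). *)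

(* Defs.v *)
From HB Require Import structures.
From mathcomp Require Import all_boot all_order all_algebra.
From mathcomp Require Import classical_sets boolp reals.
Set Implicit Arguments. Unset Strict Implicit. Unset Printing Implicit Defensive.
Import Order.TTheory GRing.Theory Num.Theory.
Local Open Scope ring_scope.
Local Open Scope classical_set_scope.

Section Defs.
Variable R : realType.

Definition l4norm (u : 'rV[R]_2) : R :=
  Num.sqrt (Num.sqrt (u 0 0 ^+ 4 + u 0 1 ^+ 4)).

Definition e1 : 'rV[R]_2 := \row_(i < 2) (if i == 0 then 1 else 0).
Definition e2 : 'rV[R]_2 := \row_(i < 2) (if i == 0 then 0 else 1).

Variable H : lmodType R.

Definition hnorm (ip : H -> H -> R) (x : H) : R := Num.sqrt (ip x x).

Definition is_real_hilbert (ip : H -> H -> R) : Prop :=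
  [/\ (forall a x y z, ip (a *: x + y) z = a * ip x z + ip y z),
      (forall x y, ip x y = ip y x),
      (forall x, 0 <= ip x x) /\ (forall x, ip x x = 0 -> x = 0),
      (forall s : nat -> H,
         (forall e : R, 0 < e -> exists N : nat, forall m n : nat,
             (N <= m)%N -> (N <= n)%N -> hnorm ip (s m - s n) < e) ->
         exists l : H, forall e : R, 0 < e -> exists N : nat, forall n : nat,
             (N <= n)%N -> hnorm ip (s n - l) < e) &
      (exists x y : H, [/\ ip x x = 1, ip y y = 1 & ip x y = 0])].

(* linear maps l_4^2 -> H (automatically bounded, the domain being finite-dim.) *)
Definition is_lin (T : 'rV[R]_2 -> H) : Prop :=
  forall (a : R) (u v : 'rV[R]_2), T (a *: u + v) = a *: T u + T v.

Definition opnorm (ip : H -> H -> R) (T : 'rV[R]_2 -> H) : R :=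
  sup [set hnorm ip (T u) | u in [set u | l4norm u = 1]].

Definition MT (ip : H -> H -> R) (T : 'rV[R]_2 -> H) : set 'rV[R]_2 :=
  [set u | l4norm u = 1 /\ hnorm ip (T u) = opnorm ip T].

Definition rank_one (T : 'rV[R]_2 -> H) : Prop :=
  (exists y : H, y != 0 /\ forall u, exists c : R, T u = c *: y) /\
  (exists u, T u != 0).

Definition extreme_contraction (ip : H -> H -> R) (T : 'rV[R]_2 -> H) : Prop :=
  is_lin T /\ opnorm ip T = 1 /\
  forall (S1 S2 : 'rV[R]_2 -> H) (t : R),
    is_lin S1 -> is_lin S2 -> opnorm ip S1 <= 1 -> opnorm ip S2 <= 1 ->
    0 < t < 1 -> (forall u, T u = t *: S1 u + (1 - t) *: S2 u) ->
    forall u, S1 u = T u /\ S2 u = T u.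

End Defs.

Definition dotc (R : realType) (n : nat) (x y : 'cV[R]_n) : R := (x^T *m y) 0 0.

(* Main.v *)
Require Import Defs.
From HB Require Import structures.
From mathcomp Require Import all_boot all_order all_algebra.
From mathcomp Require Import classical_sets boolp reals.
From mathcomp Require Import ring lra.
Import Order.TTheory GRing.Theory Num.Theory.
Local Open Scope ring_scope.
Local Open Scope classical_set_scope.
Set Implicit Arguments. Unset Strict Implicit.

Definition ipax (R : realType) (H : lmodType R) (ip : H -> H -> R) :=
  [/\ (forall a x y z, ip (a *: x + y) z = a * ip x z + ip y z),
      (forall x y, ip x y = ip y x),
      (forall x, 0 <= ip x x) & (forall x, ip x x = 0 -> x = 0)].

Lemma ipDl (R : realType) (H : lmodType R) (ip : H -> H -> R) :
  ipax ip -> forall x y z, ip (x + y) z = ip x z + ip y z.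
Proof. by case=> hl _ _ _ x y z; rewrite -[x]scale1r hl mul1r scale1r. Qed.

Lemma ip0l (R : realType) (H : lmodType R) (ip : H -> H -> R) :
  ipax ip -> forall z, ip 0 z = 0.
Proof. move=> h z; have := ipDl h 0 0 z; rewrite addr0 => E; lra. Qed.

Lemma ipZl (R : realType) (H : lmodType R) (ip : H -> H -> R) :
  ipax ip -> forall a x z, ip (a *: x) z = a * ip x z.
Proof. move=> h a x z; case: (h) => hl _ _ _.
by have := hl a x 0 z; rewrite addr0 (ip0l h) addr0. Qed.

Lemma ipNl (R : realType) (H : lmodType R) (ip : H -> H -> R) :
  ipax ip -> forall x z, ip (- x) z = - ip x z.
Proof. by move=> h x z; rewrite -scaleN1r (ipZl h) mulN1r. Qed.

Lemma ipBl (R : realType) (H : lmodType R) (ip : H -> H -> R) :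
  ipax ip -> forall x y z, ip (x - y) z = ip x z - ip y z.
Proof. by move=> h x y z; rewrite (ipDl h) (ipNl h). Qed.

Lemma ipDr (R : realType) (H : lmodType R) (ip : H -> H -> R) :
  ipax ip -> forall x y z, ip z (x + y) = ip z x + ip z y.
Proof. by move=> h x y z; case: (h) => _ hs _ _; rewrite !(hs z) (ipDl h). Qed.

Lemma ipZr (R : realType) (H : lmodType R) (ip : H -> H -> R) :
  ipax ip -> forall a x z, ip z (a *: x) = a * ip z x.
Proof. by move=> h a x z; case: (h) => _ hs _ _; rewrite !(hs z) (ipZl h). Qed.

Lemma ipNr (R : realType) (H : lmodType R) (ip : H -> H -> R) :
  ipax ip -> forall x z, ip z (- x) = - ip z x.
Proof. by move=> h x z; case: (h) => _ hs _ _; rewrite !(hs z) (ipNl h). Qed.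

Lemma ipBr (R : realType) (H : lmodType R) (ip : H -> H -> R) :
  ipax ip -> forall x y z, ip z (x - y) = ip z x - ip z y.
Proof. by move=> h x y z; rewrite (ipDr h) (ipNr h). Qed.

Lemma ip0r (R : realType) (H : lmodType R) (ip : H -> H -> R) :
  ipax ip -> forall z, ip z 0 = 0.
Proof. by move=> h z; case: (h) => _ hs _ _; rewrite hs (ip0l h). Qed.

Lemma ip_par (R : realType) (H : lmodType R) (ip : H -> H -> R) :
  ipax ip -> forall x y, ip (x + y) (x + y) <= 2 * ip x x + 2 * ip y y.
Proof.
move=> h x y; case: (h) => _ hs hp _.
have := hp (x - y).
rewrite !(ipDl h, ipDr h, ipNl h, ipNr h) (hs y x) opprK.
move=> H0; lra.
Qed.

Lemma strict_conv (R : realType) (H : lmodType R) (ip : H -> H -> R) :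
  ipax ip -> forall (y s1 s2 : H) (t : R), ip y y = 1 -> ip s1 s1 <= 1 -> ip s2 s2 <= 1 ->
  0 < t < 1 -> y = t *: s1 + (1 - t) *: s2 -> s1 = y /\ s2 = y.
Proof.
move=> h y s1 s2 t hy h1 h2 /andP[t0 t1] ey.
case: (h) => _ hs hp hd.
have es1 : s1 = s2 + (s1 - s2) by rewrite addrC subrK.
have ey' : y = s2 + t *: (s1 - s2) by rewrite ey scalerBr scalerBl scale1r addrCA.
set d := s1 - s2 in es1 ey'; clearbody d.
have hy' := hy; rewrite ey' in hy'.
have h1' := h1; rewrite es1 in h1'.
move: hy' h1'; rewrite !(ipDl h, ipDr h, ipZl h, ipZr h) ?(hs d s2).
move=> E1 E2.
have hdd : ip d d = 0.
  apply/eqP; rewrite eq_le hp andbT.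
  have tt : 0 < t * (1 - t) by apply: mulr_gt0; lra.
  have : t * (1 - t) * ip d d <= 0 by nra.
  by rewrite pmulr_rle0.
have d0 := hd _ hdd.
have e12 : s1 = s2 by rewrite es1 d0 addr0.
by rewrite ey' d0 scaler0 addr0 e12.
Qed.
Definition N4 (R : realType) (u : 'rV[R]_2) : R := u 0 0 ^+ 4 + u 0 1 ^+ 4.

Lemma l4norm_N4 (R : realType) (u : 'rV[R]_2) : l4norm u = Num.sqrt (Num.sqrt (N4 u)).
Proof. by []. Qed.

Lemma N4_ge0 (R : realType) (u : 'rV[R]_2) : 0 <= N4 u.
Proof. rewrite /N4; apply: addr_ge0; rewrite -[4%N]/(2*2)%N exprM; exact: sqr_ge0. Qed.

Lemma sqrt_eq1 (R : realType) (x : R) : 0 <= x -> Num.sqrt x = 1 -> x = 1.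
Proof. by move=> x0 e; rewrite -(sqr_sqrtr x0) e expr1n. Qed.

Lemma l4norm1 (R : realType) (u : 'rV[R]_2) : (l4norm u = 1) <-> (N4 u = 1).
Proof.
rewrite l4norm_N4; split=> [e|->]; last by rewrite !sqrtr1.
apply: sqrt_eq1; first exact: N4_ge0.
by apply: sqrt_eq1 => //; exact: sqrtr_ge0.
Qed.

Lemma e1E (R : realType) : (e1 R) 0 0 = 1 /\ (e1 R) 0 1 = 0.
Proof. by rewrite !mxE. Qed.
Lemma e2E (R : realType) : (e2 R) 0 0 = 0 /\ (e2 R) 0 1 = 1.
Proof. by rewrite !mxE. Qed.

Lemma rV2P (R : realType) (u v : 'rV[R]_2) : u 0 0 = v 0 0 -> u 0 1 = v 0 1 -> u = v.
Proof.
move=> h0 h1; apply/rowP => i.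
case: i => [[|[|i]]] hi //=.
- by rewrite (_ : Ordinal hi = 0) //; apply/val_inj.
- by rewrite (_ : Ordinal hi = 1) //; apply/val_inj.
Qed.
Lemma linD (R : realType) (H : lmodType R) (T : 'rV[R]_2 -> H) :
  is_lin T -> forall u v, T (u + v) = T u + T v.
Proof. by move=> hT u v; have := hT 1 u v; rewrite !scale1r. Qed.

Lemma lin0 (R : realType) (H : lmodType R) (T : 'rV[R]_2 -> H) :
  is_lin T -> T 0 = 0.
Proof. move=> hT; have := hT 1 0 0; rewrite scale1r addr0 scale1r => E.
by have := congr1 (fun x => x - T 0) E; rewrite addrK subrr => ->. Qed.

Lemma linZ (R : realType) (H : lmodType R) (T : 'rV[R]_2 -> H) :
  is_lin T -> forall a u, T (a *: u) = a *: T u.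
Proof. by move=> hT a u; have := hT a u 0; rewrite !addr0 lin0 // addr0. Qed.

Lemma decomp (R : realType) (u : 'rV[R]_2) : u = u 0 0 *: e1 R + u 0 1 *: e2 R.
Proof. by apply: rV2P; rewrite !mxE /=; ring. Qed.

Lemma lin_decomp (R : realType) (H : lmodType R) (T : 'rV[R]_2 -> H) :
  is_lin T -> forall u, T u = u 0 0 *: T (e1 R) + u 0 1 *: T (e2 R).
Proof. by move=> hT u; rewrite {1}(decomp u) hT linZ. Qed.

Lemma N4Z (R : realType) (a : R) u : N4 (a *: u) = a ^+ 4 * N4 u.
Proof. rewrite /N4 !mxE; ring. Qed.
Lemma N4_eq0 (R : realType) (u : 'rV[R]_2) : N4 u = 0 -> u 0 0 = 0 /\ u 0 1 = 0.
Proof.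
rewrite /N4 => N0.
have a0 : 0 <= u 0 0 ^+ 4 by rewrite -[4%N]/(2*2)%N exprM; exact: sqr_ge0.
have b0 : 0 <= u 0 1 ^+ 4 by rewrite -[4%N]/(2*2)%N exprM; exact: sqr_ge0.
have ea : u 0 0 ^+ 4 = 0 by lra.
have eb : u 0 1 ^+ 4 = 0 by lra.
by split; [move/eqP: ea | move/eqP: eb]; rewrite expf_eq0 => /andP[_ /eqP].
Qed.

Lemma opnorm_ub (R : realType) (H : lmodType R) (ip : H -> H -> R) (S : 'rV[R]_2 -> H) c :
  (forall u, N4 u = 1 -> hnorm ip (S u) <= c) -> opnorm ip S <= c.
Proof.
move=> h; apply: ge_sup.
  exists (hnorm ip (S (e1 R))); exists (e1 R) => //.
  by apply/l4norm1; rewrite /N4 !mxE /=; ring.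
by move=> y [u /l4norm1 hu <-]; apply: h.
Qed.

Lemma opnorm_hassup (R : realType) (H : lmodType R) (ip : H -> H -> R) (S : 'rV[R]_2 -> H) :
  ipax ip -> is_lin S ->
  has_sup [set hnorm ip (S u) | u in [set u | l4norm u = 1]].
Proof.
move=> h hS; split.
  exists (hnorm ip (S (e1 R))); exists (e1 R) => //.
  by apply/l4norm1; rewrite /N4 !mxE /=; ring.
case: (h) => _ _ hp _.
exists (Num.sqrt (2 * ip (S (e1 R)) (S (e1 R)) + 2 * ip (S (e2 R)) (S (e2 R)))).
move=> y [u /l4norm1 hu <-]; rewrite /hnorm ler_sqrt; last first.
  by apply: addr_ge0; apply: mulr_ge0 => //.
rewrite (lin_decomp hS u).
apply: le_trans (ip_par h _ _) _.
rewrite !(ipZl h, ipZr h).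
have a0 := hp (S (e1 R)); have b0 := hp (S (e2 R)).
move: hu; rewrite /N4 => hu.
have h0 : u 0 0 ^+ 2 <= 1 by nra.
have h1 : u 0 1 ^+ 2 <= 1 by nra.
rewrite !expr2 in h0 h1; nra.
Qed.

Lemma opnorm_bound (R : realType) (H : lmodType R) (ip : H -> H -> R) (S : 'rV[R]_2 -> H) :
  ipax ip -> is_lin S -> forall u, N4 u = 1 -> hnorm ip (S u) <= opnorm ip S.
Proof.
move=> h hS u hu; have := sup_upper_bound (opnorm_hassup h hS).
by move/ubP; apply; exists u => //; apply/l4norm1.
Qed.

Lemma bounded1 (R : realType) (H : lmodType R) (ip : H -> H -> R) (S : 'rV[R]_2 -> H) :
  ipax ip -> is_lin S -> opnorm ip S <= 1 ->
  forall u, ip (S u) (S u) <= Num.sqrt (N4 u).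
Proof.
move=> h hS hn u; case: (h) => _ _ hp _.
have hunit : forall v, N4 v = 1 -> ip (S v) (S v) <= 1.
  move=> v hv; have := le_trans (opnorm_bound h hS hv) hn.
  by rewrite /hnorm => e; rewrite -(@ler_sqrt _ _ 1) // sqrtr1.
have [N0|Npos] := eqVneq (N4 u) 0.
  have [u00 u01] := N4_eq0 N0.
  by rewrite (lin_decomp hS u) u00 u01 !scale0r addr0 (ip0l h) N0 sqrtr0.
have Np : 0 < N4 u by rewrite lt_def Npos N4_ge0.
set m := Num.sqrt (N4 u).
have m0 : 0 < m by rewrite sqrtr_gt0.
set l := Num.sqrt m.
have l0 : 0 < l by rewrite sqrtr_gt0.
have l2 : l ^+ 2 = m by rewrite sqr_sqrtr // ltW.
have m2 : m ^+ 2 = N4 u by rewrite sqr_sqrtr // ltW.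
have eu : u = l *: (l^-1 *: u) by rewrite scalerA mulfV ?gt_eqF // scale1r.
have hv : N4 (l^-1 *: u) = 1.
  rewrite N4Z -m2 -l2 -!exprM exprVn mulVf //.
  by rewrite expf_neq0 // gt_eqF.
rewrite eu linZ // (ipZl h) (ipZr h) mulrA -expr2 l2.
rewrite -[X in _ <= X]mulr1; apply: ler_wpM2l; [exact: ltW | exact: hunit].
Qed.
Lemma sqrt_le (R : realType) (x c : R) : 0 <= c -> x <= c ^+ 2 -> Num.sqrt x <= c.
Proof. by move=> c0 hx; rewrite -(ger0_norm c0) -sqrtr_sqr; apply: ler_wsqrtr. Qed.

Lemma lemA (R : realType) (H : lmodType R) (ip : H -> H -> R) (S : 'rV[R]_2 -> H) (v w : 'rV[R]_2) :
  ipax ip -> is_lin S -> (forall u, ip (S u) (S u) <= Num.sqrt (N4 u)) ->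
  (forall s, N4 (v + s *: w) = 1 + s ^+ 4) -> ip (S v) (S v) = 1 -> S w = 0.
Proof.
move=> h hS hb hvw hv; case: (h) => _ hs hp hd.
set c := ip (S w) (S w).
have key : forall s, 1 + 2 * s * ip (S v) (S w) + s ^+ 2 * c <= 1 + s ^+ 4 / 2.
  move=> s; have := hb (v + s *: w); rewrite hvw linD // linZ //.
  rewrite !(ipDl h, ipDr h, ipZl h, ipZr h) hv (hs (S w) (S v)) => e.
  have : Num.sqrt (1 + s ^+ 4) <= 1 + s ^+ 4 / 2.
    apply: sqrt_le.
      by apply: addr_ge0 => //; apply: divr_ge0 => //; rewrite -[4%N]/(2*2)%N exprM; exact: sqr_ge0.
    have : 0 <= s ^+ 4 * s ^+ 4 by rewrite -expr2; exact: sqr_ge0.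
    move=> q; rewrite expr2; nra.
  move=> e2; have := le_trans e e2; rewrite -/c; nra.
have c0 : 0 <= c by exact: hp.
set s := Num.sqrt c.
have s2 : s ^+ 2 = c by rewrite sqr_sqrtr.
have k1 := key s; have k2 := key (- s).
have s4 : s ^+ 4 = c ^+ 2 by rewrite -s2 -exprM.
have n4 : (- s) ^+ 4 = s ^+ 4 by ring.
rewrite sqrrN n4 s2 s4 in k2; rewrite s2 s4 in k1.
have cc : c ^+ 2 <= 0 by nra.
apply: hd; have : c ^+ 2 == 0 by rewrite eq_le cc sqr_ge0.
by rewrite expf_eq0 => /andP[_ /eqP].
Qed.
Lemma lemIf (R : realType) (H : lmodType R) (ip : H -> H -> R) (T : 'rV[R]_2 -> H) (v w : 'rV[R]_2) :
  ipax ip -> is_lin T -> opnorm ip T = 1 -> N4 v = 1 ->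
  (forall s, N4 (v + s *: w) = 1 + s ^+ 4) ->
  (forall u, exists c d, u = c *: v + d *: w) ->
  ip (T v) (T v) = 1 -> extreme_contraction ip T.
Proof.
move=> h hT nT Nv hvw hdec hv.
have bT : forall u, ip (T u) (T u) <= Num.sqrt (N4 u) by apply: bounded1 => //; rewrite nT.
have Tw := lemA h hT bT hvw hv.
split => //; split => // S1 S2 t l1 l2 n1 n2 ht hTS.
have b1 := bounded1 h l1 n1; have b2 := bounded1 h l2 n2.
have [e1' e2'] : S1 v = T v /\ S2 v = T v.
  apply: (strict_conv h hv _ _ ht (hTS v)).
    by have := b1 v; rewrite Nv sqrtr1.
  by have := b2 v; rewrite Nv sqrtr1.
have w1 : S1 w = 0 by apply: (lemA h l1 b1 hvw); rewrite e1'.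
have w2 : S2 w = 0 by apply: (lemA h l2 b2 hvw); rewrite e2'.
move=> u; have [c [d ->]] := hdec u.
by rewrite !(l1, l2, hT) !linZ // w1 w2 Tw e1' e2'.
Qed.

Lemma N4e12 (R : realType) (s : R) : N4 (e1 R + s *: e2 R) = 1 + s ^+ 4.
Proof. by rewrite /N4 !mxE /=; ring. Qed.
Lemma N4e21 (R : realType) (s : R) : N4 (e2 R + s *: e1 R) = 1 + s ^+ 4.
Proof. by rewrite /N4 !mxE /=; ring. Qed.
Lemma N4e1 (R : realType) : N4 (e1 R) = 1.
Proof. by rewrite /N4 !mxE /=; ring. Qed.
Lemma N4e2 (R : realType) : N4 (e2 R) = 1.
Proof. by rewrite /N4 !mxE /=; ring. Qed.
Lemma dec12 (R : realType) (u : 'rV[R]_2) : exists c d, u = c *: e1 R + d *: e2 R.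
Proof. by exists (u 0 0), (u 0 1); exact: decomp. Qed.
Lemma dec21 (R : realType) (u : 'rV[R]_2) : exists c d, u = c *: e2 R + d *: e1 R.
Proof. by exists (u 0 1), (u 0 0); rewrite addrC; exact: decomp. Qed.
Lemma pow4_ge0 (R : realType) (x : R) : 0 <= x ^+ 4.
Proof. by rewrite -[4%N]/(2*2)%N exprM; exact: sqr_ge0. Qed.

Lemma lemMT (R : realType) (H : lmodType R) (ip : H -> H -> R) (T : 'rV[R]_2 -> H)
    (v w : 'rV[R]_2) (pv pw : 'rV[R]_2 -> R) :
  ipax ip -> is_lin T -> opnorm ip T = 1 -> T w = 0 ->
  (forall u, N4 u = pv u ^+ 4 + pw u ^+ 4) ->
  (forall u, u = pv u *: v + pw u *: w) ->
  pv v = 1 -> pw v = 0 -> pv (- v) = -1 -> pw (- v) = 0 ->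
  ip (T v) (T v) = 1 /\ MT ip T = [set u | u = v \/ u = - v].
Proof.
move=> h hT nT Tw hN hdec pv1 pw1 pv2 pw2.
case: (h) => _ hs hp hd.
have Tu : forall u, T u = pv u *: T v.
  by move=> u; rewrite {1}(hdec u) hT linZ // Tw scaler0 addr0.
set k := ip (T v) (T v).
have k0 : 0 <= k by exact: hp.
have hn : forall u, hnorm ip (T u) = Num.sqrt (pv u ^+ 2 * k).
  by move=> u; rewrite /hnorm Tu (ipZl h) (ipZr h) mulrA -expr2.
have Nv : N4 v = 1 by rewrite hN pv1 pw1; ring.
have k1 : k <= 1.
  have bT : forall u, ip (T u) (T u) <= Num.sqrt (N4 u) by apply: bounded1 => //; rewrite nT.
  by have := bT v; rewrite Nv sqrtr1.
have k1' : 1 <= k.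
  have : opnorm ip T <= Num.sqrt k.
    apply: opnorm_ub => u hu; rewrite hn; apply: ler_wsqrtr.
    have := pow4_ge0 (pw u); have := sqr_ge0 (pv u); move: hu; rewrite hN => hu a b.
    have : pv u ^+ 2 <= 1.
      have e : pv u ^+ 4 = (pv u ^+ 2) ^+ 2 by rewrite -exprM.
      rewrite e in hu; nra.
    move=> c; rewrite -[X in _ <= X]mul1r; apply: ler_wpM2r => //.
  by rewrite nT -{1}sqrtr1 ler_sqrt.
have ek : k = 1 by apply/eqP; rewrite eq_le k1 k1'.
split => //.
rewrite /MT nT; apply/seteqP; split => u /=.
  move=> [/l4norm1 hu]; rewrite hn ek mulr1 => hs1.
  have p2 : pv u ^+ 2 = 1 by apply: sqrt_eq1 => //; exact: sqr_ge0.
  have p4 : pw u ^+ 4 = 0.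
    move: hu; rewrite hN => hu.
    have e : pv u ^+ 4 = (pv u ^+ 2) ^+ 2 by rewrite -exprM.
    rewrite e p2 in hu; lra.
  have pw0 : pw u = 0 by move/eqP: p4; rewrite expf_eq0 => /andP[_ /eqP].
  have : (pv u - 1) * (pv u + 1) == 0 by rewrite -subr_sqr p2 expr1n subrr.
  rewrite mulf_eq0 => /orP[/eqP e|/eqP e].
    left; rewrite (hdec u) pw0 scale0r addr0.
    have -> : pv u = 1 by lra.
    by rewrite scale1r.
  right; rewrite (hdec u) pw0 scale0r addr0.
  have -> : pv u = -1 by lra.
  by rewrite scaleN1r.
move=> [->|->]; split.
- by apply/l4norm1.
- by rewrite hn pv1 ek; rewrite expr1n mulr1 sqrtr1.
- by apply/l4norm1; rewrite hN pv2 pw2; ring.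
- by rewrite hn pv2 ek sqrrN expr1n mulr1 sqrtr1.
Qed.
Lemma cube_root (R : realType) (a : R) : exists p, p ^+ 3 = a.
Proof.
set m := `|a| + 1.
have m1 : 1 <= m by rewrite /m lerDr normr_ge0.
have ha : a <= `|a| by exact: ler_norm.
have hb : - a <= `|a| by rewrite -normrN; exact: ler_norm.
have m3 : m <= m ^+ 3 by rewrite !exprS expr0 mulr1; nra.
have [x _ rx] : exists2 x, - m <= x <= m & root ('X^3 - a%:P) x.
  apply: poly_ivt; first by lra.
  rewrite !hornerE /=; apply/andP; split.
    have -> : (- m) ^+ 3 = - m ^+ 3 by ring.
    rewrite /m in m3 *; lra.
  rewrite /m in m3 *; lra.
exists x; move: rx; rewrite /root !hornerE => /eqP; lra.
Qed.

Lemma poly_core (R : realType) (A B X Y : R) : 0 <= A -> 0 <= B -> A + B = 1 ->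
  ((A * X + B * Y) ^+ 2 + (A * B / 10) * (X - Y) ^+ 2) ^+ 2 <= A * X ^+ 4 + B * Y ^+ 4.
Proof.
move=> A0 B0 AB.
have eA : A = 1 - B by lra.
set h := A * X + B * Y; set d := X - Y; set t := B - A.
set Q := 6 * h ^+ 2 + 4 * t * h * d + (A ^+ 3 + B ^+ 3) * d ^+ 2.
have id1 : A * X ^+ 4 + B * Y ^+ 4 = h ^+ 4 + A * B * d ^+ 2 * Q.
  by rewrite /Q /h /d /t eA; ring.
have id2 : Q - (h ^+ 2 + d ^+ 2) / 5 =
    29 / 5 * (h + 10 * t / 29 * d) ^+ 2 + (29 + 35 * t ^+ 2) / 580 * d ^+ 2.
  by rewrite /Q /t eA; field.
have Qge : (h ^+ 2 + d ^+ 2) / 5 <= Q.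
  have t2 := sqr_ge0 t.
  rewrite -subr_ge0 id2; apply: addr_ge0; apply: mulr_ge0; try exact: sqr_ge0; lra.
have ABq : A * B <= 1 / 4 by have := sqr_ge0 (B - 1/2); rewrite eA; nra.
have AB0 : 0 <= A * B by exact: mulr_ge0.
rewrite id1.
have d2 := sqr_ge0 d; have h2 := sqr_ge0 h.
set D := d ^+ 2 in d2 Qge *; set K := h ^+ 2 in h2 Qge *.
have -> : h ^+ 4 = K ^+ 2 by rewrite /K -exprM.
set P := A * B in ABq AB0 *.
have : P * D * (Q - (K + D) / 5) >= 0.
  apply: mulr_ge0; [exact: mulr_ge0 | lra].
have : P * D * D * (1/5 - P / 100) >= 0.
  apply: mulr_ge0; [apply: mulr_ge0 => //; exact: mulr_ge0 | lra].
nra.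
Qed.
Lemma normalize (R : realType) (H : lmodType R) (ip : H -> H -> R) (y z : H) :
  ipax ip -> ip z z != 0 -> ip y z = 0 -> exists w, ip w w = 1 /\ ip y w = 0.
Proof.
move=> h nz yz; case: (h) => _ hs hp hd.
have zp : 0 < ip z z by rewrite lt_def nz hp.
set k := Num.sqrt (ip z z).
have k0 : 0 < k by rewrite sqrtr_gt0.
have k2 : k ^+ 2 = ip z z by rewrite sqr_sqrtr // ltW.
exists (k^-1 *: z); split; last by rewrite (ipZr h) yz mulr0.
by rewrite (ipZl h) (ipZr h) mulrA -expr2 exprVn k2 mulVf.
Qed.

Lemma ortho_exists (R : realType) (H : lmodType R) (ip : H -> H -> R) (y : H) :
  ipax ip -> (exists x z : H, [/\ ip x x = 1, ip z z = 1 & ip x z = 0]) ->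
  ip y y = 1 -> exists w, ip w w = 1 /\ ip y w = 0.
Proof.
move=> h [x1 [x2 [n1 n2 o12]]] ny; case: (h) => _ hs hp hd.
set z1 := x1 - ip x1 y *: y; set z2 := x2 - ip x2 y *: y.
have o1 : ip y z1 = 0 by rewrite (ipBr h) (ipZr h) ny mulr1 hs subrr.
have o2 : ip y z2 = 0 by rewrite (ipBr h) (ipZr h) ny mulr1 hs subrr.
have [e1|ne1] := eqVneq (ip z1 z1) 0; last exact: (normalize h ne1 o1).
have [e2|ne2] := eqVneq (ip z2 z2) 0; last exact: (normalize h ne2 o2).
have ex1 : x1 = ip x1 y *: y by apply/eqP; rewrite -subr_eq0; apply/eqP; exact: hd.
have ex2 : x2 = ip x2 y *: y by apply/eqP; rewrite -subr_eq0; apply/eqP; exact: hd.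
move: n1 n2 o12; rewrite ex1 ex2 !(ipZl h, ipZr h) ny !mulr1.
set a := ip x1 y; set b := ip x2 y.
move=> n1 n2 o12.
have : (a * a) * (b * b) = 1 by rewrite n1 n2 mulr1.
have -> : (a * a) * (b * b) = (a * b) * (a * b) by ring.
by rewrite o12 mulr0 => /eqP; rewrite eq_sym oner_eq0.
Qed.
Lemma lemOnly (R : realType) (H : lmodType R) (ip : H -> H -> R) (T : 'rV[R]_2 -> H) (y : H) (a b : R) :
  ipax ip -> (exists x z : H, [/\ ip x x = 1, ip z z = 1 & ip x z = 0]) ->
  is_lin T -> opnorm ip T = 1 -> extreme_contraction ip T ->
  ip y y = 1 -> T (e1 R) = a *: y -> T (e2 R) = b *: y -> a = 0 \/ b = 0.
Proof.
move=> h hon hT nT [_ [_ hext]] ny Te1 Te2.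
have [->|a0] := eqVneq a 0; first by left.
have [->|b0] := eqVneq b 0; first by right.
exfalso; case: (h) => _ hs hp hd.
have [w [nw yw]] := ortho_exists h hon ny.
have wy : ip w y = 0 by rewrite hs.
have Tu : forall u, T u = (a * u 0 0 + b * u 0 1) *: y.
  by move=> u; rewrite (lin_decomp hT u) Te1 Te2 !scalerA -scalerDl [u 0 0 * a]mulrC [u 0 1 * b]mulrC.
have bT : forall u : 'rV[R]_2, (a * u 0 0 + b * u 0 1) ^+ 2 <= Num.sqrt (N4 u).
  have bT' : forall u, ip (T u) (T u) <= Num.sqrt (N4 u) by apply: bounded1 => //; rewrite nT.
  by move=> u; have := bT' u; rewrite Tu (ipZl h) (ipZr h) ny mulr1 -expr2.
have [p0 ep0] := cube_root a; have [q0 eq0] := cube_root b.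
have p00 : p0 != 0 by apply: contraNneq a0 => e; rewrite -ep0 e expr0n.
have q00 : q0 != 0 by apply: contraNneq b0 => e; rewrite -eq0 e expr0n.
set s0 := p0 ^+ 4 + q0 ^+ 4.
have s0p : 0 < s0.
  have p4 : 0 < p0 ^+ 4 by rewrite lt_def expf_neq0 // pow4_ge0.
  have := pow4_ge0 q0; rewrite /s0; lra.
set r := Num.sqrt (Num.sqrt s0).
have r0 : 0 < r by rewrite !sqrtr_gt0.
have r4 : r ^+ 4 = s0.
  by rewrite -[4%N]/(2*2)%N exprM sqr_sqrtr ?sqrtr_ge0 // sqr_sqrtr // ltW.
have rn0 : r != 0 by rewrite gt_eqF.
set p := p0 / r; set q := q0 / r.
have ep : p0 = r * p by rewrite /p mulrC divfK.
have eq : q0 = r * q by rewrite /q mulrC divfK.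
have pn0 : p != 0 by rewrite /p mulf_neq0 // invr_neq0.
have qn0 : q != 0 by rewrite /q mulf_neq0 // invr_neq0.
have pq1 : p ^+ 4 + q ^+ 4 = 1.
  have : r ^+ 4 * (p ^+ 4 + q ^+ 4) = r ^+ 4 * 1.
    by rewrite mulr1 {2}r4 /s0 ep eq; ring.
  by move/mulfI; apply; rewrite expf_neq0.
have ea : a = r ^+ 3 * p ^+ 3 by rewrite -ep0 ep exprMn.
have eb : b = r ^+ 3 * q ^+ 3 by rewrite -eq0 eq exprMn.
have r6 : r ^+ 6 <= 1.
  have := bT (p *: e1 R + q *: e2 R).
  have -> : N4 (p *: e1 R + q *: e2 R) = 1 by apply: etrans pq1; rewrite /N4 !mxE /=; ring.
  rewrite sqrtr1 !mxE /= ea eb.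
  have -> : r ^+ 3 * p ^+ 3 * (p * 1 + q * 0) + r ^+ 3 * q ^+ 3 * (p * 0 + q * 1)
     = r ^+ 3 * (p ^+ 4 + q ^+ 4) by ring.
  by rewrite pq1 mulr1 -exprM.
set A := p ^+ 4; set B := q ^+ 4.
have A0 : 0 < A by rewrite lt_def expf_neq0 // pow4_ge0.
have B0 : 0 < B by rewrite lt_def expf_neq0 // pow4_ge0.
set dl := A * B / 10.
have dl0 : 0 < dl by apply: divr_gt0 => //; apply: mulr_gt0.
have dl1 : dl <= 1.
  have hA : A <= 1 by move: pq1; rewrite -/A -/B; lra.
  have hB : B <= 1 by move: pq1; rewrite -/A -/B; lra.
  have : A * B <= 1 by nra.
  rewrite /dl; lra.
set g := fun u : 'rV[R]_2 => u 0 0 / p - u 0 1 / q.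
have key : forall u : 'rV[R]_2, N4 u = 1 -> (a * u 0 0 + b * u 0 1) ^+ 2 + (dl * g u) ^+ 2 <= 1.
  move=> u hu.
  set X := u 0 0 / p; set Y := u 0 1 / q.
  have ex : u 0 0 = p * X by rewrite /X mulrC divfK.
  have ey : u 0 1 = q * Y by rewrite /Y mulrC divfK.
  have hf : a * u 0 0 + b * u 0 1 = r ^+ 3 * (A * X + B * Y).
    by rewrite ea eb ex ey /A /B; ring.
  have hg : g u = X - Y by [].
  have core := poly_core X Y (ltW A0) (ltW B0) pq1.
  have hN : A * X ^+ 4 + B * Y ^+ 4 = 1 by rewrite -hu /N4 ex ey /A /B; ring.
  rewrite hN in core; rewrite hf hg.
  set hh := A * X + B * Y in core *; set d := X - Y in core *.
  have h2 := sqr_ge0 hh; have d2 := sqr_ge0 d.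
  have e1' : (r ^+ 3 * hh) ^+ 2 = r ^+ 6 * hh ^+ 2 by rewrite exprMn -exprM.
  have e2' : (dl * d) ^+ 2 = dl ^+ 2 * d ^+ 2 by rewrite exprMn.
  rewrite e1' e2'.
  have r60 : 0 <= r ^+ 6 by rewrite exprn_ge0 // ltW.
  have : dl ^+ 2 <= dl by rewrite expr2; nra.
  set Z := hh ^+ 2 + dl * d ^+ 2 in core.
  have Z0 : 0 <= Z by rewrite /Z; apply: addr_ge0 => //; apply: mulr_ge0 => //; exact: ltW.
  have Z1 : Z <= 1 by nra.
  rewrite /Z in Z1 Z0; nra.
set S := fun u : 'rV[R]_2 => (dl * g u) *: w.
have lS : is_lin S.
  move=> c u v; rewrite /S /g !mxE scalerA -scalerDl; congr (_ *: _); ring.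
have lS1 : is_lin (fun u => T u + S u).
  by move=> c u v; rewrite hT lS scalerDr addrACA.
have lS2 : is_lin (fun u => T u - S u).
  by move=> c u v; rewrite hT lS scalerBr opprD addrACA.
have nS : forall (sg : R), sg ^+ 2 = 1 -> forall u, N4 u = 1 ->
    hnorm ip (T u + sg *: S u) <= 1.
  move=> sg hsg u hu; rewrite /hnorm -sqrtr1; apply: ler_wsqrtr.
  rewrite Tu /S scalerA !(ipDl h, ipDr h, ipZl h, ipZr h) ny nw yw wy !mulr0 !addr0 add0r.
  have := key u hu.
  set F := a * u 0 0 + b * u 0 1; set G := dl * g u.
  have -> : F * (F * 1) + sg * G * (sg * G * 1) = F ^+ 2 + sg ^+ 2 * G ^+ 2 by ring.
  by rewrite hsg mul1r.
have n1 : opnorm ip (fun u => T u + S u) <= 1.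
  by apply: opnorm_ub => u hu; have := nS 1 (expr1n _ _) u hu; rewrite scale1r.
have n2 : opnorm ip (fun u => T u - S u) <= 1.
  have m1 : (-1 : R) ^+ 2 = 1 by rewrite sqrrN expr1n.
  by apply: opnorm_ub => u hu; have := nS (-1) m1 u hu; rewrite scaleN1r.
have ht : ((0 : R) < 1 / 2) && (1 / 2 < 1 :> R).
  by apply/andP; split; lra.
have dec : forall u, T u = 1 / 2 *: (T u + S u) + (1 - 1 / 2) *: (T u - S u).
  move=> u; rewrite (_ : 1 - 1 / 2 = 1 / 2 :> R); last by field.
  rewrite -scalerDr addrACA subrr addr0 -mulr2n -scaler_nat scalerA.
  by rewrite (_ : 1 / 2 * 2%:R = 1 :> R) ?scale1r //; field.
have [E1 _] := hext _ _ _ lS1 lS2 n1 n2 ht dec (e1 R).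
have : S (e1 R) = 0.
  by have := congr1 (fun x => x - T (e1 R)) E1; rewrite /= addrC addKr subrr.
rewrite /S /g !mxE /= => /(congr1 (fun x => ip x x)).
rewrite (ipZl h) (ipZr h) nw (ip0l h) mulr1 => /eqP.
by rewrite mul0r subr0 mul1r -expr2 sqrf_eq0 mulf_eq0 invr_eq0 (negbTE pn0) orbF (gt_eqF dl0).
Qed.
Lemma part1 (R : realType) (H : lmodType R) (ip : H -> H -> R) (T : 'rV[R]_2 -> H) :
  ipax ip -> (exists x z : H, [/\ ip x x = 1, ip z z = 1 & ip x z = 0]) ->
  is_lin T -> (exists y : H, y != 0 /\ forall u, exists c : R, T u = c *: y) -> opnorm ip T = 1 ->
  (extreme_contraction ip T <->
        (MT ip T = [set u | u = e1 R \/ u = - e1 R] \/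
         MT ip T = [set u | u = e2 R \/ u = - e2 R])).
Proof.
move=> h hon hT [y0 [y0n hy]] nT; case: (h) => _ hs hp hd.
have ipone : forall v, MT ip T v -> ip (T v) (T v) = 1.
  move=> v [_]; rewrite nT /hnorm; apply: sqrt_eq1; exact: hp.
split; last first.
  case=> E.
  - apply: (lemIf h hT nT (N4e1 R) (@N4e12 R) (@dec12 R)); apply: ipone.
    by rewrite E; left.
  - apply: (lemIf h hT nT (N4e2 R) (@N4e21 R) (@dec21 R)); apply: ipone.
    by rewrite E; left.
move=> hext.
have [c1 e1'] := hy (e1 R); have [c2 e2'] := hy (e2 R).
have k0 : 0 < ip y0 y0.
  rewrite lt_def hp andbT; apply/eqP => e; move: y0n; rewrite (hd _ e) eqxx //.
set r := Num.sqrt (ip y0 y0).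
have r0 : 0 < r by rewrite sqrtr_gt0.
have r2 : r ^+ 2 = ip y0 y0 by rewrite sqr_sqrtr // ltW.
set y := r^-1 *: y0.
have ny : ip y y = 1.
  by rewrite /y (ipZl h) (ipZr h) mulrA -expr2 exprVn r2 mulVf // gt_eqF.
have ey0 : y0 = r *: y by rewrite /y scalerA mulfV ?gt_eqF // scale1r.
have Te1 : T (e1 R) = (c1 * r) *: y by rewrite e1' ey0 scalerA.
have Te2 : T (e2 R) = (c2 * r) *: y by rewrite e2' ey0 scalerA.
case: (lemOnly h hon hT nT hext ny Te1 Te2) => e0.
- right.
  have T0 : T (e1 R) = 0 by rewrite Te1 e0 scale0r.
  have a1 : (e2 R) 0 1 = 1 by rewrite !mxE.
  have a2 : (e2 R) 0 0 = 0 by rewrite !mxE.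
  have a3 : (- e2 R) 0 1 = -1 by rewrite !mxE.
  have a4 : (- e2 R) 0 0 = 0 by rewrite !mxE /= oppr0.
  have [_ ->] := lemMT (pv := fun u => u 0 1) (pw := fun u => u 0 0) h hT nT T0
    (fun u => addrC _ _) (fun u => etrans (decomp u) (addrC _ _)) a1 a2 a3 a4.
  by [].
- left.
  have T0 : T (e2 R) = 0 by rewrite Te2 e0 scale0r.
  have a1 : (e1 R) 0 0 = 1 by rewrite !mxE.
  have a2 : (e1 R) 0 1 = 0 by rewrite !mxE.
  have a3 : (- e1 R) 0 0 = -1 by rewrite !mxE.
  have a4 : (- e1 R) 0 1 = 0 by rewrite !mxE /= oppr0.
  have [_ ->] := lemMT (pv := fun u => u 0 0) (pw := fun u => u 0 1) h hT nT T0
    (fun u => erefl) (@decomp R) a1 a2 a3 a4.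
  by [].
Qed.
Lemma dotcE (R : realType) (n : nat) (x y : 'cV[R]_n) : dotc x y = \sum_i x i 0 * y i 0.
Proof. by rewrite /dotc !mxE; apply: eq_bigr => i _; rewrite !mxE. Qed.

Lemma dotc_ipax (R : realType) (n : nat) : ipax (@dotc R n).
Proof.
split.
- move=> a x y z; rewrite !dotcE mulr_sumr -big_split; apply: eq_bigr => i _.
  by rewrite !mxE mulrDl mulrA.
- by move=> x y; rewrite !dotcE; apply: eq_bigr => i _; rewrite mulrC.
- by move=> x; rewrite dotcE; apply: sumr_ge0 => i _; rewrite -expr2 sqr_ge0.
- move=> x; rewrite dotcE => /eqP; rewrite psumr_eq0; last by move=> i _; rewrite -expr2 sqr_ge0.
  move=> /allP hx; apply/matrixP => i j; rewrite [j]ord1 mxE.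
  have := hx i (mem_index_enum _); rewrite /= mulf_eq0 orbb => /eqP //.
Qed.

Lemma dotc_delta (R : realType) (n : nat) (i j : 'I_n) :
  dotc (delta_mx i 0 : 'cV[R]_n) (delta_mx j 0) = (i == j)%:R.
Proof.
rewrite dotcE (bigD1 i) //= big1 => [|k hk]; last by rewrite !mxE (negbTE hk) mul0r.
by rewrite !mxE eqxx /= mul1r addr0 andbT.
Qed.

Lemma dotc_on (R : realType) (n : nat) : (2 <= n)%N ->
  exists x z : 'cV[R]_n, [/\ dotc x x = 1, dotc z z = 1 & dotc x z = 0].
Proof.
move=> n2.
have h0 : (0 < n)%N by apply: leq_trans n2.
have h1 : (1 < n)%N by [].
exists (delta_mx (Ordinal h0) 0), (delta_mx (Ordinal h1) 0).
by rewrite !dotc_delta !eqxx.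
Qed.

Lemma matlin (R : realType) (n : nat) (A : 'M[R]_(n, 2)) : is_lin (fun u : 'rV[R]_2 => A *m u^T).
Proof. by move=> a u v; rewrite linearD linearZ /= mulmxDr scalemxAr. Qed.

Lemma colE (R : realType) (n : nat) (A : 'M[R]_(n, 2)) (u : 'rV[R]_2) i :
  (A *m u^T) i 0 = A i 0 * u 0 0 + A i 1 * u 0 1.
Proof.
rewrite !mxE big_ord_recr big_ord1 /= !mxE.
by congr (A i _ * u 0 _ + A i _ * u 0 _); apply/val_inj.
Qed.
Lemma mat_rank_one (R : realType) (n : nat) (A : 'M[R]_(n, 2)) : \rank A = 1%N ->
  exists y : 'cV[R]_n, y != 0 /\ forall u : 'rV[R]_2, exists c : R, A *m u^T = c *: y.
Proof.
move=> rA; have rT : \rank A^T = 1%N by rewrite mxrank_tr.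
have [i hi] : exists i, row i A^T != 0.
  case: (pselect (exists i, row i A^T != 0)) => // hn; exfalso.
  have A0 : A^T = 0.
    apply/row_matrixP => i; rewrite row0; by apply/eqP/negPn/negP => hi; apply: hn; exists i.
  by move: rT; rewrite A0 mxrank0.
set v := row i A^T.
have rv : \rank v = 1%N by rewrite rank_rV hi.
have sv : (v <= A^T)%MS by exact: row_sub.
have sA : (A^T <= v)%MS.
  by have [_ e] := mxrank_leqif_sup sv; rewrite rT rv eqxx in e; rewrite -e.
exists v^T; split; first by rewrite trmx_eq0.
move=> u; have : (u *m A^T <= v)%MS by apply: submx_trans (submxMl u A^T) sA.
case/sub_rVP => c hc; exists c.
by rewrite -[A *m u^T]trmxK trmx_mul trmxK hc linearZ.
Qed.
Lemma opnorm_one (R : realType) (H : lmodType R) (ip : H -> H -> R) (T : 'rV[R]_2 -> H)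
    (v w : 'rV[R]_2) (pv pw : 'rV[R]_2 -> R) :
  ipax ip -> is_lin T -> N4 v = 1 -> ip (T v) (T v) = 1 -> T w = 0 ->
  (forall u, u = pv u *: v + pw u *: w) ->
  (forall u, N4 u = pv u ^+ 4 + pw u ^+ 4) -> opnorm ip T = 1.
Proof.
move=> h hT Nv nv Tw hdec hN.
have Tu : forall u, T u = pv u *: T v.
  by move=> u; rewrite {1}(hdec u) hT linZ // Tw scaler0 addr0.
apply/eqP; rewrite eq_le; apply/andP; split.
  apply: opnorm_ub => u hu; rewrite /hnorm Tu (ipZl h) (ipZr h) nv mulr1 -sqrtr1.
  apply: ler_wsqrtr; have := pow4_ge0 (pw u); have := sqr_ge0 (pv u).
  move: hu; rewrite hN => hu a b.
  have e : pv u ^+ 4 = (pv u ^+ 2) ^+ 2 by rewrite -exprM.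
  rewrite e in hu; rewrite -expr2; nra.
by have := opnorm_bound h hT Nv; rewrite /hnorm nv sqrtr1.
Qed.

Lemma rowmx_e1 (R : realType) (n : nat) (x : 'cV[R]_n) : row_mx x (0 : 'cV[R]_n) = x *m e1 R.
Proof.
apply/matrixP => i j; rewrite !mxE big_ord1 !mxE; case: splitP => k hk; rewrite [k]ord1 in hk *.
  have -> : j = 0 by apply/val_inj.
  by rewrite /= ?eqxx ?mulr1 ?mulr0 ?mxE.
have -> : j = 1 by apply/val_inj; rewrite /= hk.
by rewrite /= ?eqxx ?mulr1 ?mulr0 ?mxE.
Qed.

Lemma rowmx_e2 (R : realType) (n : nat) (x : 'cV[R]_n) : row_mx (0 : 'cV[R]_n) x = x *m e2 R.
Proof.
apply/matrixP => i j; rewrite !mxE big_ord1 !mxE; case: splitP => k hk; rewrite [k]ord1 in hk *.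
  have -> : j = 0 by apply/val_inj.
  by rewrite /= ?eqxx ?mulr1 ?mulr0 ?mxE.
have -> : j = 1 by apply/val_inj; rewrite /= hk.
by rewrite /= ?eqxx ?mulr1 ?mulr0 ?mxE.
Qed.

Lemma Acols (R : realType) (n : nat) (A : 'M[R]_(n, 2)) :
  A = row_mx (A *m (e1 R)^T) (A *m (e2 R)^T).
Proof.
apply/matrixP => i j; rewrite mxE; case: splitP => k hk; rewrite [k]ord1 in hk *;
  rewrite colE !mxE /=.
  have -> : j = 0 by apply/val_inj.
  by rewrite /=; ring.
have -> : j = 1 by apply/val_inj; rewrite /= hk.
by rewrite /=; ring.
Qed.
Lemma Tx1 (R : realType) (n : nat) (x : 'cV[R]_n) (u : 'rV[R]_2) :
  row_mx x (0 : 'cV[R]_n) *m u^T = u 0 0 *: x.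
Proof.
apply/matrixP => i j; rewrite [j]ord1 colE rowmx_e1 !mxE !big_ord1 !mxE /=; ring.
Qed.

Lemma Tx2 (R : realType) (n : nat) (x : 'cV[R]_n) (u : 'rV[R]_2) :
  row_mx (0 : 'cV[R]_n) x *m u^T = u 0 1 *: x.
Proof.
apply/matrixP => i j; rewrite [j]ord1 colE rowmx_e2 !mxE !big_ord1 !mxE /=; ring.
Qed.

Lemma part2 (R : realType) (n : nat) : (2 <= n)%N -> forall A : 'M[R]_(n, 2),
     (\rank A = 1%N /\ extreme_contraction (@dotc R n) (fun u => A *m u^T)) <->
     (exists x : 'cV[R]_n, \sum_(i < n) x i 0 ^+ 2 = 1 /\
        (A = row_mx x (0 : 'cV[R]_n) \/ A = row_mx (0 : 'cV[R]_n) x)).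
Proof.
move=> n2 A.
have h := @dotc_ipax R n; have hon := @dotc_on R n n2.
have hT := matlin A.
have sq : forall x : 'cV[R]_n, \sum_(i < n) x i 0 ^+ 2 = dotc x x.
  by move=> x; rewrite dotcE; apply: eq_bigr => i _; rewrite expr2.
split.
  move=> [rA ext]; have ext' := ext; case: ext => _ [nT _].
  have [y [yn hy]] := mat_rank_one rA.
  have bT : forall u, dotc (A *m u^T) (A *m u^T) <= Num.sqrt (N4 u).
    by apply: (bounded1 h hT); rewrite nT.
  have ipone : forall v, MT (@dotc R n) (fun u => A *m u^T) v -> dotc (A *m v^T) (A *m v^T) = 1.
    move=> v [_]; rewrite nT /hnorm; apply: sqrt_eq1; case: h => _ _ hp _; exact: hp.
  have [E|E] := (part1 h hon hT (ex_intro _ y (conj yn hy)) nT).1 ext'.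
  - have n1 := ipone (e1 R) (ltac:(rewrite E; by left)).
    have Te2 : A *m (e2 R)^T = 0 := lemA h hT bT (@N4e12 R) n1.
    exists (A *m (e1 R)^T); split; first by rewrite sq.
    by left; rewrite {1}(Acols A) Te2.
  - have n1 := ipone (e2 R) (ltac:(rewrite E; by left)).
    have Te1 : A *m (e1 R)^T = 0 := lemA h hT bT (@N4e21 R) n1.
    exists (A *m (e2 R)^T); split; first by rewrite sq.
    by right; rewrite {1}(Acols A) Te1.
move=> [x [sx [EA|EA]]].
- have Te1 : A *m (e1 R)^T = x by rewrite EA Tx1 !mxE scale1r.
  have Te2 : A *m (e2 R)^T = 0 by rewrite EA Tx1 !mxE scale0r.
  have n1 : dotc (A *m (e1 R)^T) (A *m (e1 R)^T) = 1 by rewrite Te1 -sq.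
  have nT := opnorm_one (pv := fun u => u 0 0) (pw := fun u => u 0 1) h hT (N4e1 R) n1 Te2 (@decomp R) (fun u => erefl).
  split; last exact: (lemIf h hT nT (N4e1 R) (@N4e12 R) (@dec12 R) n1).
  apply/eqP; rewrite eqn_leq; apply/andP; split.
    by rewrite EA rowmx_e1; apply: leq_trans (mxrankM_maxl _ _) (rank_leq_col x).
  rewrite lt0n mxrank_eq0; apply/eqP => A0; move: n1; rewrite A0 mul0mx (ip0l h) => /eqP.
  by rewrite eq_sym oner_eq0.
- have Te2 : A *m (e2 R)^T = x by rewrite EA Tx2 !mxE scale1r.
  have Te1 : A *m (e1 R)^T = 0 by rewrite EA Tx2 !mxE scale0r.
  have n1 : dotc (A *m (e2 R)^T) (A *m (e2 R)^T) = 1 by rewrite Te2 -sq.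
  have nT := opnorm_one (pv := fun u => u 0 1) (pw := fun u => u 0 0) h hT (N4e2 R) n1 Te1
    (fun u => etrans (decomp u) (addrC _ _)) (fun u => addrC _ _).
  split; last exact: (lemIf h hT nT (N4e2 R) (@N4e21 R) (@dec21 R) n1).
  apply/eqP; rewrite eqn_leq; apply/andP; split.
    by rewrite EA rowmx_e2; apply: leq_trans (mxrankM_maxl _ _) (rank_leq_col x).
  rewrite lt0n mxrank_eq0; apply/eqP => A0; move: n1; rewrite A0 mul0mx (ip0l h) => /eqP.
  by rewrite eq_sym oner_eq0.
Qed.

Unset Implicit Arguments.

Theorem mainTheorem14 (R : realType) :
  (forall (H : lmodType R) (ip : H -> H -> R) (T : 'rV[R]_2 -> H),
     is_real_hilbert ip -> is_lin T -> rank_one T -> opnorm ip T = 1 ->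
     (extreme_contraction ip T <->
        (MT ip T = [set u | u = e1 R \/ u = - e1 R] \/
         MT ip T = [set u | u = e2 R \/ u = - e2 R]))) /\
  (forall (n : nat), (2 <= n)%N -> forall A : 'M[R]_(n, 2),
     (\rank A = 1%N /\ extreme_contraction (@dotc R n) (fun u => A *m u^T)) <->
     (exists x : 'cV[R]_n, \sum_(i < n) x i 0 ^+ 2 = 1 /\
        (A = row_mx x (0 : 'cV[R]_n) \/ A = row_mx (0 : 'cV[R]_n) x))).
Proof.
split.
  move=> H ip T [hl hs [hp hd] _ hon] hT hr nT.
  exact: (part1 (And4 hl hs hp hd) hon hT (proj1 hr) nT).
exact: part2.
Qed.
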